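(* Let $\mathbb{D}$ be a discrete polymatroid on ground set $\{1,\dots,r\}$ with rank function $\rho$ and $\rho(\{1,\dots,r\})=k$, and let $\mathcal{I}_{\mathbb{D}}(Z,\mathcal{R})$ be the generalized index coding problem constructed from $\mathbb{D}$ (defined in the context). If a perfect linear index coding solution of dimension $n$ over $\mathbb{F}_2$ exists for $\mathcal{I}_{\mathbb{D}}(Z,\mathcal{R})$, then the discrete polymatroid $n\mathbb{D}$ is representable over $\mathbb{F}_2$.
   Context: A discrete polymatroid on $\{1,\dots,r\}$ with rank function $\rho:2^{\{1,\dots,r\}}\to\mathbb{Z}_{\ge0}$ (monotone, submodular, $\rho(\emptyset)=0$) is the set $\mathbb{D}=\{u\in\mathbb{Z}_{\ge0}^r: \sum_{i\in A}u_i\le\rho(A)\ \forall A\subseteq\{1,\dots,r\}\}$. For $u,v\in\mathbb{Z}_{\ge0}^r$, $u\le v$ means componentwise and $u<v$ means $u\le v$, $u\ne v$; $(u)_{>0}$ is the set of indices of nonzero components. A basis vector of $\mathbb{D}$ is $u\in\mathbb{D}$ with no $v\in\mathbb{D}$, $u<v$; $\mathcal{B}(\mathbb{D})$ is the set of basis vectors. An excluded vector is $u\in\mathbb{Z}_{\ge0}^r$ with $u_i\le\rho(\{i\})$ for all $i$ and $u\notin\mathbb{D}$; it is minimal if no excluded $v$ satisfies $v<u$; $\mathcal{C}(\mathbb{D})$ is the set of minimal excluded vectors. $n\mathbb{D}$ is the discrete polymatroid on $\{1,\dots,r\}$ with rank function $n\rho$. It is representable over $\mathbb{F}_2$ if there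 are subspaces $V_1,\dots,V_r$ of an $\mathbb{F}_2$-vector space with $\dim(\sum_{i\in S}V_i)=n\rho(S)$ for all $S$. Construction of $\mathcal{I}_{\mathbb{D}}(Z,\mathcal{R})$: messages $Z=X\cup Y$ with $X=\{x_1,\dots,x_k\}$ and $Y=\{y_i^j: i\in\{1,\dots,r\}, j\in\{1,\dots,\rho(\{i\})\}\}$; with dimension $n$ each message lies in $\mathbb{F}_2^n$. Let $\zeta_i=\{y_i^1,\dots,y_i^{\rho(\{i\})}\}$. A receiver is a pair (demanded message, Has-set); a Has-set that is a set of messages means the receiver knows those messages, and a Has-set that is a sum $\sum_{y\in\Gamma}y$ means the receiver knows only the vector $\sum_{y\in\Gamma}y\in\mathbb{F}_2^n$. $\mathcal{R}=R_1\cup R_2\cup R_3$ where: $R_1=\bigcup_{b\in\mathcal{B}(\mathbb{D})}S_1(b)$ with $S_1(b)=\{(x_j,\bigcup_{l\in(b)_{>0}}\eta_l): j\in\{1,\dots,k\},\ \eta_l\subseteq\zeta_l,\ |\eta_l|=b_l\}$; $R_2=\bigcup_{c\in\mathcal{C}(\mathbb{D})}\bigcup_{j\in(c)_{>0}}\bigcup_{p\in\{1,\dots,\rho(\{j\})\}}S_2(c,j,p)$ with $S_2(c,j,p)=\{(y_j^p,\sum_{y\in\Gamma_1\cup\Gamma_2}y): \Gamma_1=\bigcup_{l\in(c)_{>0}\setminus\{j\}}\eta_l,\ \eta_l\subseteq\zeta_l,\ |\eta_l|=c_l,\ \Gamma_2\subseteq\zeta_j\setminus\{y_j^p\},\ |\Gamma_2|=c_j-1\}$;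 $R_3=\{(y_i^j,X): i\in\{1,\dots,r\}, j\in\{1,\dots,\rho(\{i\})\}\}$. An index code of length $l$ and dimension $n$ over $\mathbb{F}_2$ is a map $f$ from the concatenated messages in $\mathbb{F}_2^{n|Z|}$ to $\mathbb{F}_2^l$ such that each receiver can compute its demanded message from its Has-set and $f$ of the messages; it is linear if $f$ is linear. With $\mu$ the maximum number of receivers having the same Has-set, a solution is perfect if $l/n=\mu$. *)

(* Defs.v *)
From HB Require Import structures.
From mathcomp Require Import all_boot all_order all_algebra.
From Stdlib Require Import ClassicalEpsilon.
Set Implicit Arguments. Unset Strict Implicit. Unset Printing Implicit Defensive.
Import GRing.Theory.

Definition pb (P : Prop) : bool :=
  if excluded_middle_informative P then true else false.

Section Polymatroid.
Variables (r : nat) (rho : {set 'I_r} -> nat).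

Definition vec := {ffun 'I_r -> nat}.

Definition vle (u v : vec) : Prop := forall i, u i <= v i.
Definition vlt (u v : vec) : Prop := vle u v /\ u <> v.

Definition inD (u : vec) : Prop :=
  forall A : {set 'I_r}, \sum_(i in A) u i <= rho A.

Definition basis_vec (u : vec) : Prop :=
  inD u /\ ~ (exists v, inD v /\ vlt u v).

Definition excluded (u : vec) : Prop :=
  (forall i, u i <= rho [set i]) /\ ~ inD u.
Definition min_excluded (u : vec) : Prop :=
  excluded u /\ ~ (exists v, excluded v /\ vlt v u).

Definition kk := rho [set: 'I_r].

(* messages: X = {x_1..x_k} (inl), Y = {y_i^j} (inr (i; j)), j 0-based *)
Definition Yidx := {i : 'I_r & 'I_(rho [set i])}.
Definition Msg := ('I_kk + Yidx)%type.

Definition xmsg (j : 'I_kk) : Msg := inl j.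
Definition ymsg (i : 'I_r) (j : 'I_(rho [set i])) : Msg := inr (existT _ i j).

Definition Xset : {set Msg} := [set m : Msg | is_inl m].
Definition zeta (i : 'I_r) : {set Msg} := [set ymsg j | j : 'I_(rho [set i])].

(* Has-sets: inl S = the receiver knows the messages in S;
   inr S = the receiver knows only the sum of the messages in S.
   A sum over a single message is the same information as knowing that
   message, so it is identified with the corresponding set Has-set. *)
Definition HasSet := ({set Msg} + {set Msg})%type.
Definition HKnow (S : {set Msg}) : HasSet := inl S.
Definition HSum (S : {set Msg}) : HasSet :=
  if #|S| == 1 then inl S else inr S.

Definition support (u : vec) : {set 'I_r} := [set i | 0 < u i].

Definition inR1 (d : Msg) (H : HasSet) : Prop :=
  exists (b : vec) (j : 'I_kk) (eta : 'I_r -> {set Msg}),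
    basis_vec b /\ d = xmsg j /\
    (forall l, l \in support b -> eta l \subset zeta l /\ #|eta l| = b l) /\
    H = HKnow (\bigcup_(l in support b) eta l).

Definition inR2 (d : Msg) (H : HasSet) : Prop :=
  exists (c : vec) (j : 'I_r) (p : 'I_(rho [set j]))
         (eta : 'I_r -> {set Msg}) (G2 : {set Msg}),
    min_excluded c /\ j \in support c /\ d = ymsg p /\
    (forall l, l \in support c :\ j -> eta l \subset zeta l /\ #|eta l| = c l) /\
    G2 \subset zeta j :\ ymsg p /\ #|G2| = (c j).-1 /\
    H = HSum ((\bigcup_(l in support c :\ j) eta l) :|: G2).

Definition inR3 (d : Msg) (H : HasSet) : Prop :=
  exists (i : 'I_r) (j : 'I_(rho [set i])), d = ymsg j /\ H = HKnow Xset.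

Definition receiver (d : Msg) (H : HasSet) : Prop :=
  inR1 d H \/ inR2 d H \/ inR3 d H.

Definition mu : nat :=
  \max_(H : HasSet) #|[set d : Msg | pb (receiver d H)]|.

Definition info n (H : HasSet) (z : {ffun Msg -> 'rV['F_2]_n})
  : {ffun Msg -> 'rV['F_2]_n} :=
  match H with
  | inl T => [ffun m => if m \in T then z m else 0%R]
  | inr T => [ffun _ => (\sum_(m in T) z m)%R]
  end.

Definition lin_encode n l (E : Msg -> 'M['F_2]_(n, l))
  (z : {ffun Msg -> 'rV['F_2]_n}) : 'rV['F_2]_l :=
  (\sum_(m : Msg) z m *m E m)%R.

Definition linear_index_code n l (E : Msg -> 'M['F_2]_(n, l)) : Prop :=
  forall d H, receiver d H ->
    exists g : {ffun Msg -> 'rV['F_2]_n} -> 'rV['F_2]_l -> 'rV['F_2]_n,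
      forall z, g (info H z) (lin_encode E z) = z d.

(* perfect: l / n = mu, i.e. l = mu * n (n > 0) *)
Definition perfect_linear_solution n : Prop :=
  exists l (E : Msg -> 'M['F_2]_(n, l)),
    linear_index_code E /\ l = mu * n.

Definition representable_F2 n : Prop :=
  exists (m : nat) (V : 'I_r -> 'M['F_2]_m),
    forall S : {set 'I_r}, \rank (\sum_(i in S) V i)%MS = n * rho S.

End Polymatroid.

(* Main.v *)
Require Import Defs.
From mathcomp Require Import all_boot all_order all_algebra.
From mathcomp Require Import zify.
From Stdlib Require Import Classical Eqdep_dec ClassicalEpsilon.
Set Implicit Arguments. Unset Strict Implicit. Unset Printing Implicit Defensive.
Section Poly.
Variables (r : nat) (rho : {set 'I_r} -> nat).
Hypothesis h0 : rho set0 = 0.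
Hypothesis hmono : forall A B : {set 'I_r}, A \subset B -> rho A <= rho B.
Hypothesis hsub : forall A B : {set 'I_r}, rho (A :|: B) + rho (A :&: B) <= rho A + rho B.

Definition sumA (u : vec r) (A : {set 'I_r}) := \sum_(i in A) u i.
Definition tight (u : vec r) A := sumA u A == rho A.
Definition incr (u : vec r) j : vec r := [ffun i => u i + (i == j)].

Lemma sumUI u A B : sumA u (A :|: B) + sumA u (A :&: B) = sumA u A + sumA u B.
Proof.
rewrite /sumA (@big_setID _ _ _ _ (A :|: B) A) (@big_setID _ _ _ _ B A).
have -> : (A :|: B) :&: A = A by apply/setP => i; rewrite !inE; case: (i \in A); case: (i \in B).
have -> : (A :|: B) :\: A = B :\: A by apply/setP => i; rewrite !inE; case: (i \in A); case: (i \in B).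
have -> : B :&: A = A :&: B by rewrite setIC.
rewrite /=. lia.
Qed.

Lemma inD_le u i : inD rho u -> u i <= rho [set i].
Proof. by move=> H; have := H [set i]; rewrite big_set1. Qed.

Lemma tightU u A B : inD rho u -> tight u A -> tight u B -> tight u (A :|: B).
Proof.
move=> H /eqP tA /eqP tB; apply/eqP.
have := sumUI u A B; have := hsub A B; have := H (A :|: B); have := H (A :&: B).
rewrite /sumA in tA tB *. lia.
Qed.

Lemma tight0 u : tight u set0.
Proof. by rewrite /tight /sumA big_set0 h0. Qed.

Lemma tight_cover u (S : {set 'I_r}) : inD rho u ->
  (forall j, j \in S -> exists A : {set 'I_r}, j \in A /\ tight u A) ->
  exists T : {set 'I_r}, S \subset T /\ tight u T.
Proof.
move=> H ex.
case: (@arg_maxnP _ set0 (tight u) (fun A => #|A|) (tight0 u)) => T tT maxT.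
exists T; split => //; apply/subsetP => j jS.
have [A [jA tA]] := ex j jS.
have tU := tightU H tT tA.
have m := maxT _ tU.
have sub : T \subset T :|: A by apply: subsetUl.
move: (subset_leqif_card sub) => [le eqv].
have : #|T| == #|T :|: A| by rewrite eqn_leq le /=; exact: m.
rewrite eqv => sub'.
by apply: (subsetP sub'); rewrite inE jA orbT.
Qed.

Lemma sum_indicator (A : {set 'I_r}) j : \sum_(i in A) (i == j : nat) = (j \in A).
Proof.
case: (boolP (j \in A)) => jA.
  rewrite (big_setD1 j jA) eqxx big1 // => i; rewrite !inE => /andP [/negbTE -> _] //.
by rewrite big1 // => i iA; case: eqP => // eij; move: jA; rewrite -eij iA.
Qed.

Lemma sumA_incr u A j : sumA (incr u j) A = sumA u A + (j \in A).
Proof.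
rewrite /sumA -sum_indicator -big_split /=; apply: eq_bigr => i _; by rewrite ffunE.
Qed.

Lemma notinD_tight u j : inD rho u -> ~ inD rho (incr u j) ->
  exists A : {set 'I_r}, j \in A /\ tight u A.
Proof.
move=> H nD; apply: NNPP => nex; apply: nD => A.
have := sumA_incr u A j; rewrite /sumA => ->.
case: (boolP (j \in A)) => jA; last by rewrite addn0; exact: H.
have : ~ tight u A by move=> tA; apply: nex; exists A.
rewrite /tight /sumA; have := H A; move=> h1 h2.
have : \sum_(i in A) u i != rho A by apply/negP.
rewrite /= in h1 *. lia.
Qed.

Lemma vlt_exists (u v : vec r) : vlt u v -> exists i, u i < v i.
Proof.
move=> [le neq]; apply: NNPP => nex; apply: neq; apply/ffunP => i.
have := le i; rewrite leq_eqVlt => /orP [/eqP //|lt]; exfalso; apply: nex; by exists i.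
Qed.

Lemma sum_vlt (u v : vec r) : vlt u v -> \sum_i u i < \sum_i v i.
Proof.
move=> uv; have [i lti] := vlt_exists uv; case: uv => le _.
rewrite (bigD1 i) //= [X in _ < X](bigD1 i) //=.
have : \sum_(j | j != i) u j <= \sum_(j | j != i) v j by apply: leq_sum => j _; exact: le.
by move=> h; rewrite -addSn; apply: leq_add.
Qed.

Lemma sum_vlt_bnd (u v : vec r) (bnd : 'I_r -> nat) : vlt u v -> (forall i, v i <= bnd i) ->
  \sum_i (bnd i - v i) < \sum_i (bnd i - u i).
Proof.
move=> uv hb; have [i lti] := vlt_exists uv; case: uv => le _.
rewrite (bigD1 i) //= [X in _ < X](bigD1 i) //=.
have : \sum_(j | j != i) (bnd j - v j) <= \sum_(j | j != i) (bnd j - u j).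
  by apply: leq_sum => j _; have := le j; have := hb j; lia.
move=> h; rewrite -addSn; apply: leq_add => //; have := hb i; lia.
Qed.

Lemma ascent (P : vec r -> Prop) u : P u -> (forall v, P v -> inD rho v) ->
  exists b, P b /\ vle u b /\ ~ (exists v, P v /\ vlt b v).
Proof.
move=> Pu hP.
pose m (v : vec r) := \sum_i (rho [set i] - v i).
suff: forall k u, m u <= k -> P u -> exists b, P b /\ vle u b /\ ~ (exists v, P v /\ vlt b v).
  by move=> /(_ (m u) u (leqnn _) Pu).
elim=> [|k IH] u0 hm Pu0.
  all: case: (classic (exists v, P v /\ vlt u0 v)) => [[v [Pv uv]]|nex];
    last by exists u0; split => //; split => // i.
  all: have hv := sum_vlt_bnd uv (fun i => inD_le i (hP _ Pv)).
  - by have := leq_trans hv hm.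
  - have [b [Pb [vb nb]]] := IH v (leq_trans hv hm) Pv.
    exists b; split => //; split => // i; apply: leq_trans (vb i); exact: uv.1.
Qed.

Lemma inD_down (c u : vec r) : vle c u -> inD rho u -> inD rho c.
Proof. by move=> le H A; apply: leq_trans (H A); apply: leq_sum => i _; exact: le. Qed.

Lemma descent u : excluded rho u -> exists c, min_excluded rho c /\ vle c u.
Proof.
suff: forall k (u : vec r), \sum_i u i <= k -> excluded rho u -> exists c, min_excluded rho c /\ vle c u.
  by move=> /(_ _ u (leqnn _)).
elim=> [|k IH] u0 hm eu0.
  all: case: (classic (exists v, excluded rho v /\ vlt v u0)) => [[v [ev vu]]|nex];
    last by exists u0; split => //; split => // i.
  all: have hv := sum_vlt vu.
  - by have := leq_trans hv hm.
  - have [c [mc cv]] := IH v (leq_trans hv hm) ev.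
    exists c; split => // i; apply: leq_trans (cv i) _; exact: vu.1.
Qed.

Lemma greedy (S : {set 'I_r}) : exists u, inD rho u /\ (forall i, i \notin S -> u i = 0) /\
   sumA u S = rho S.
Proof.
pose P (v : vec r) := inD rho v /\ (forall i, i \notin S -> v i = 0).
have P0 : P [ffun => 0].
  split; last by move=> i _; rewrite ffunE.
  by move=> A; rewrite big1 // => i _; rewrite ffunE.
have [b [[Db Sb] [_ nb]]] := ascent P0 (fun v pv => pv.1).
exists b; split => //; split => //.
have [T [ST tT]] : exists T : {set 'I_r}, S \subset T /\ tight b T.
  apply: tight_cover => // j jS; apply: notinD_tight => // Dj.
  apply: nb; exists (incr b j); split.
    split => // i iS; rewrite ffunE Sb //; case: eqP => // eij; by rewrite eij jS in iS.
  split; first by move=> i; rewrite ffunE leq_addr.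
  move=> /ffunP /(_ j); rewrite /incr ffunE eqxx addn1. move=> h. exact: (n_Sn _ h).
have e : sumA b T = sumA b S.
  rewrite /sumA (@big_setID _ _ _ _ T S) /= [X in _ + X]big1 ?addn0.
    apply: eq_bigl => i; rewrite !inE; case: (boolP (i \in S)) => iS; rewrite ?andbT ?andbF //=.
    exact: (subsetP ST).
  by move=> i; rewrite !inE => /andP [iS _]; exact: Sb.
apply/eqP; rewrite eqn_leq; apply/andP; split; first exact: Db.
move/eqP: tT; rewrite e => ->; exact: hmono.
Qed.

Lemma basis_sum b : basis_vec rho b -> \sum_i b i = kk rho.
Proof.
move=> [Db nb].
have [T [ST tT]] : exists T : {set 'I_r}, [set: 'I_r] \subset T /\ tight b T.
  apply: tight_cover => // j _; apply: notinD_tight => // Dj.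
  apply: nb; exists (incr b j); split => //.
  split; first by move=> i; rewrite ffunE leq_addr.
  move=> /ffunP /(_ j); rewrite /incr ffunE eqxx addn1. move=> h. exact: (n_Sn _ h).
have eT : T = [set: 'I_r] by apply/eqP; rewrite eqEsubset ST subsetT.
move/eqP: tT; rewrite eT /sumA /kk => <-.
by apply: eq_bigl => i; rewrite in_setT.
Qed.

Lemma inD_sum_le b : inD rho b -> \sum_i b i <= kk rho.
Proof.
move=> Db; have := Db [set: 'I_r]; rewrite /kk.
by rewrite (eq_bigl (fun i => true)) // => i; rewrite in_setT.
Qed.
End Poly.
Section Msgs.
Variables (r : nat) (rho : {set 'I_r} -> nat).

Definition ytag (m : Msg rho) : option 'I_r := if m is inr y then Some (tag y) else None.

Lemma ymsg_inj i : injective (@ymsg r rho i).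
Proof. move=> p q [] h; exact: (inj_pair2_eq_dec _ (@eq_comparable _) _ _ _ _ h). Qed.

Lemma zeta_tag j m : m \in zeta rho j -> ytag m = Some j.
Proof. by case/imsetP => p _ ->. Qed.

Lemma ymsg_zeta i (p : 'I_(rho [set i])) : ymsg p \in zeta rho i.
Proof. exact: imset_f. Qed.

Definition Yset : {set Msg rho} := [set m | ~~ is_inl m].

Lemma zeta_Y j : zeta rho j \subset Yset.
Proof. by apply/subsetP => m /imsetP [p _ ->]; rewrite inE. Qed.

Lemma card_disj (P : {set 'I_r}) (A : 'I_r -> {set Msg rho}) :
  (forall l, l \in P -> A l \subset zeta rho l) ->
  #|\bigcup_(l in P) A l| = \sum_(l in P) #|A l|.
Proof.
move: {2}#|P| (erefl #|P|) => k; elim: k P => [|k IH] P hc hA.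
  by rewrite (cards0_eq hc) !big_set0 cards0.
have [j jP] : exists j, j \in P by apply/card_gt0P; rewrite hc.
rewrite (big_setD1 j jP) (big_setD1 j jP) /= cardsU.
have -> : A j :&: \bigcup_(l in P :\ j) A l = set0.
  apply/setP => m; rewrite !inE; apply/negP => /andP [mj /bigcupP [l]].
  rewrite !inE => /andP [lj lP] ml.
  have := zeta_tag (subsetP (hA j jP) _ mj); rewrite (zeta_tag (subsetP (hA l lP) _ ml)).
  by move=> [] el; rewrite el eqxx in lj.
rewrite cards0 subn0 IH //.
  by move: hc; rewrite (cardsD1 j P) jP; case.
by move=> l; rewrite !inE => /andP [_ lP]; exact: hA.
Qed.

Lemma card_ltord m a : a <= m -> #|[set p : 'I_m | p < a]| = a.
Proof.
move=> am.
have -> : [set p : 'I_m | p < a] = [set widen_ord am q | q in 'I_a].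
  apply/setP => p; rewrite inE; apply/idP/imsetP.
    by move=> pa; exists (Ordinal pa) => //; apply: val_inj.
  by case=> q _ ->; rewrite /= ltn_ord.
rewrite card_imset ?card_ord //.
by move=> x y /(congr1 val) /= /val_inj.
Qed.

Definition pre i a : {set Msg rho} := [set ymsg p | p in [set p : 'I_(rho [set i]) | p < a]].

Lemma card_pre i a : a <= rho [set i] -> #|pre i a| = a.
Proof. by move=> h; rewrite card_imset ?card_ltord //; exact: ymsg_inj. Qed.

Lemma pre_zeta i a : pre i a \subset zeta rho i.
Proof. by apply/subsetP => m /imsetP [p _ ->]; exact: ymsg_zeta. Qed.

Lemma mem_pre i (p : 'I_(rho [set i])) a : (ymsg p \in pre i a) = (p < a).
Proof. by rewrite mem_imset ?inE //; exact: ymsg_inj. Qed.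

Definition Tset (u : vec r) : {set Msg rho} := \bigcup_(l in Defs.support u) pre l (u l).

Lemma card_Tset (u : vec r) : (forall i, u i <= rho [set i]) -> #|Tset u| = \sum_i u i.
Proof.
move=> hu; rewrite card_disj; last by move=> l _; exact: pre_zeta.
rewrite (eq_bigr (fun l => u l)); last by move=> l _; rewrite card_pre.
rewrite [RHS](bigID (fun l => l \in Defs.support u)) /= [X in _ = _ + X]big1 ?addn0 //.
by move=> l; rewrite inE -eqn0Ngt => /eqP.
Qed.

Lemma mem_Tset (u : vec r) i (p : 'I_(rho [set i])) : (ymsg p \in Tset u) = (p < u i).
Proof.
apply/bigcupP/idP.
  case=> l _ ml; have := zeta_tag (subsetP (pre_zeta l (u l)) _ ml).
  case=> el; subst l; by rewrite mem_pre in ml.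
move=> pu; exists i; first by rewrite inE; apply: leq_ltn_trans pu.
by rewrite mem_pre.
Qed.

Lemma Tset_Y (u : vec r) : Tset u \subset Yset.
Proof. apply/bigcupsP => l _; apply: subset_trans (pre_zeta _ _) (zeta_Y _). Qed.

Lemma Tset_mono (u v : vec r) : vle u v -> Tset u \subset Tset v.
Proof.
move=> uv; apply/subsetP => m mu.
have : m \in Yset by apply: (subsetP (Tset_Y u)).
case: m mu => [x|[i p]]; rewrite ?inE //.
move=> h _; have := h; rewrite (mem_Tset u (i:=i) p) => pu.
by rewrite (mem_Tset v (i:=i) p); apply: leq_trans pu (uv i).
Qed.
End Msgs.

Lemma pbP (P : Prop) : pb P = true <-> P.
Proof. by rewrite /pb; case: excluded_middle_informative. Qed.

Section MuBound.
Variables (r : nat) (rho : {set 'I_r} -> nat).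
Hypothesis h0 : rho set0 = 0.
Hypothesis hmono : forall A B : {set 'I_r}, A \subset B -> rho A <= rho B.
Hypothesis hsub : forall A B : {set 'I_r}, rho (A :|: B) + rho (A :&: B) <= rho A + rho B.

Lemma ymsg_notX i (p : 'I_(rho [set i])) : ymsg p \notin Xset rho.
Proof. by rewrite inE. Qed.

Lemma recv_notin d (T : {set Msg rho}) : receiver d (inl T) -> d \notin T.
Proof.
case=> [h|[h|h]].
- case: h => b [j [eta [_ [-> [heta [eT]]]]]].
  subst T; apply/bigcupP => [[l lb]]; move=> /(subsetP (heta l lb).1) /(subsetP (zeta_Y rho l)).
  by rewrite inE.
- case: h => c [j [p [eta [G2 [_ [jc [-> [heta [hG2 [_ eH]]]]]]]]]].
  move: eH; rewrite /HSum; case: (_ == 1) => // [[eT]]; subst T.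
  rewrite in_setU negb_or; apply/andP; split.
    apply/bigcupP => [[l lc]] ml.
    have := zeta_tag (subsetP (heta l lc).1 _ ml); rewrite (zeta_tag (ymsg_zeta p)).
    by move=> [] el; move: lc; rewrite el !inE eqxx.
  by apply/negP => /(subsetP hG2); rewrite !inE eqxx.
- case: h => i [j [-> [eT]]].
  by subst T; rewrite ymsg_notX.
Qed.

Lemma recv_Y d H : inR2 d H \/ inR3 d H -> d \in Yset rho.
Proof.
case=> [[c [j [p [eta [G2 [_ [jc [-> _]]]]]]]]|[i [j [-> _]]]]; by rewrite inE.
Qed.

Lemma R1_card d (T : {set Msg rho}) : inR1 d (inl T) -> #|T| = kk rho.
Proof.
case=> b [j [eta [bb [_ [heta [eT]]]]]]; subst T.
rewrite card_disj; last by move=> l lb; exact: (heta l lb).1.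
rewrite (eq_bigr (fun l => b l)); last by move=> l lb; exact: (heta l lb).2.
rewrite -(basis_sum h0 hsub bb).
rewrite [RHS](bigID (fun l => l \in Defs.support b)) /= [X in _ = _ + X]big1 ?addn0 //.
by move=> l; rewrite inE -eqn0Ngt => /eqP.
Qed.

Lemma card_X : #|Xset rho| = kk rho.
Proof.
have -> : Xset rho = [set inl j | j : 'I_(kk rho)].
  apply/setP => m; rewrite inE; apply/idP/imsetP; first by case: m => // j _; exists j.
  by case=> j _ ->.
by rewrite card_imset ?card_ord // => x y [].
Qed.

Lemma YC : Yset rho = ~: Xset rho.
Proof. by apply/setP => m; rewrite !inE. Qed.

Lemma card_Msg : #|{: Msg rho}| = kk rho + #|Yset rho|.
Proof. rewrite YC; have h := cardsC (Xset rho); have h2 := card_X. by rewrite -h h2. Qed.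

Lemma mu_bound : mu rho <= #|Yset rho|.
Proof.
apply/bigmax_leqP => H _.
case: H => T.
  case: (classic (exists d0, inR1 d0 (inl T))) => [[d0 h1]|n1].
    have cT := R1_card h1.
    have -> : #|Yset rho| = #|~: T|.
      have h := cardsC T; have h2 := cardsC (Yset rho).
      have h3 : #|~: Yset rho| = kk rho by rewrite YC setCK card_X.
      lia.
    apply: subset_leq_card; apply/subsetP => d; rewrite inE => /pbP /recv_notin.
    by rewrite inE.
  apply: subset_leq_card; apply/subsetP => d; rewrite inE => /pbP.
  case=> [h|h]; first by exfalso; apply: n1; exists d.
  exact: recv_Y h.
apply: subset_leq_card; apply/subsetP => d; rewrite inE => /pbP.
case=> [[b [j [eta [_ [_ [_ []]]]]]]|h]; [by [] | apply: recv_Y].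
case: h => [h|[i [j [_ []]]]]; [left; exact: h | by []].
Qed.
End MuBound.

Import GRing.Theory.
Local Open Scope ring_scope.

Section Mx.
Variables (r : nat) (rho : {set 'I_r} -> nat) (n : nat).

Definition Idx := (Msg rho * 'I_n)%type.
Definition cc := #|{: Idx}|.

Definition unflat (w : 'rV['F_2]_cc) : {ffun Msg rho -> 'rV['F_2]_n} :=
  [ffun m => \row_t w 0 (enum_rank ((m, t) : Idx))].

Definition Fm l (E : Msg rho -> 'M['F_2]_(n, l)) : 'M['F_2]_(cc, l) :=
  \matrix_(j, s) E (enum_val j).1 (enum_val j).2 s.

Lemma unflatE w m t : unflat w m 0 t = w 0 (enum_rank ((m, t) : Idx)).
Proof. by rewrite ffunE mxE. Qed.

Lemma lin_unflat l (E : Msg rho -> 'M['F_2]_(n, l)) w :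
  lin_encode E (unflat w) = w *m Fm E.
Proof.
apply/rowP => s; rewrite /lin_encode summxE !mxE.
rewrite (reindex (@enum_rank _)); last first.
  by exists (fun j : 'I_cc => enum_val j) => x _; [exact: enum_rankK | exact: enum_valK].
rewrite (eq_bigr (fun m => \sum_t unflat w m 0 t * E m t s)); last by move=> m _; rewrite !mxE.
rewrite pair_big /=; apply: eq_bigr => [[m t]] _.
by rewrite unflatE mxE enum_rankK.
Qed.

Lemma lin_encode0 l (E : Msg rho -> 'M['F_2]_(n, l)) : lin_encode E 0 = 0.
Proof. by rewrite /lin_encode big1 // => m _; rewrite ffunE mul0mx. Qed.

Definition Dm (Q : {set Msg rho}) : 'M['F_2]_cc :=
  diag_mx (\row_j (((enum_val j).1 \in Q) : nat)%:R).


Lemma mulD0_in w (Q : {set Msg rho}) : w *m Dm Q = 0 -> forall m, m \in Q -> unflat w m = 0.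
Proof.
move=> h m mQ; apply/rowP => t; rewrite unflatE mxE.
have := congr1 (fun M : 'rV['F_2]_cc => M 0 (enum_rank ((m, t) : Idx))) h.
by rewrite mul_mx_diag !mxE enum_rankK /= mQ mulr1.
Qed.

Lemma mulD0 w (Q : {set Msg rho}) : (forall m, m \in Q -> unflat w m = 0) -> w *m Dm Q = 0.
Proof.
move=> h; apply/rowP => j; rewrite mul_mx_diag !mxE.
case: (boolP ((enum_val j).1 \in Q)) => jQ; last by rewrite mulr0.
have := h _ jQ => /rowP /(_ (enum_val j).2); rewrite unflatE mxE -surjective_pairing enum_valK.
by move=> ->; rewrite mul0r.
Qed.

Lemma unflat0 w : (forall m, unflat w m = 0) -> w = 0.
Proof.
move=> h; apply/rowP => j; have := h (enum_val j).1 => /rowP /(_ (enum_val j).2).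
by rewrite unflatE !mxE -surjective_pairing enum_valK.
Qed.

Lemma DmM (P Q : {set Msg rho}) : Dm P *m Dm Q = Dm (P :&: Q).
Proof.
apply/matrixP => i j; rewrite mul_mx_diag !mxE inE.
case: (eqVneq i j) => [<-|ne]; last by rewrite !mulr0n mul0r.
by case: ((enum_val i).1 \in P); case: ((enum_val i).1 \in Q); rewrite /= ?mulr1 ?mulr0 ?mul0r.
Qed.

Lemma rank_diag01 (F : fieldType) m (C : {set 'I_m}) :
  \rank (diag_mx (\row_j ((j \in C) : nat)%:R) : 'M[F]_m) = #|C|.
Proof.
set d := \row_j _.
have E : (diag_mx d :=: \sum_(i in C) <<delta_mx 0 i : 'rV[F]_m>>)%MS.
  apply/eqmxP/andP; split.
    apply/row_subP => i; rewrite row_diag_mx mxE.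
    case: (boolP (i \in C)) => iC /=; last by rewrite scale0r sub0mx.
    by rewrite scale1r; apply: (sumsmx_sup i) => //; rewrite genmxE.
  apply/sumsmx_subP => i iC; rewrite genmxE.
  have <- : row i (diag_mx d) = delta_mx 0 i by rewrite row_diag_mx mxE iC scale1r.
  exact: row_sub.
rewrite E.
have := @mxdirect_delta F _ (mem C) m id (fun x y _ _ h => h).
move/mxdirectP => /= ->.
rewrite (eq_bigr (fun _ => 1%N)); last by move=> i _; rewrite mxrank_gen mxrank_delta.
by rewrite sum1_card.
Qed.

Lemma rank_Dm (Q : {set Msg rho}) : \rank (Dm Q) = (#|Q| * n)%N.
Proof.
pose CQ := [set j : 'I_cc | (enum_val j).1 \in Q].
have -> : Dm Q = diag_mx (\row_j ((j \in CQ) : nat)%:R).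
  by congr diag_mx; apply/rowP => j; rewrite !mxE inE.
rewrite rank_diag01.
have -> : CQ = [set enum_rank x | x in setX Q [set: 'I_n]].
  apply/setP => j; rewrite inE; apply/idP/imsetP => [jQ|[x xQ ->]].
    by exists (enum_val j); [rewrite inE jQ in_setT | rewrite enum_valK].
  by rewrite enum_rankK; move: xQ; rewrite inE => /andP [].
by rewrite card_imset ?cardsX ?cardsT ?card_ord //; exact: enum_rank_inj.
Qed.
End Mx.

Section Main.
Variables (r : nat) (rho : {set 'I_r} -> nat) (n l : nat) (E : Msg rho -> 'M['F_2]_(n, l)).
Hypothesis h0 : rho set0 = 0.
Hypothesis hmono : forall A B : {set 'I_r}, A \subset B -> (rho A <= rho B)%N.
Hypothesis hsub : forall A B : {set 'I_r}, (rho (A :|: B) + rho (A :&: B) <= rho A + rho B)%N.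
Hypothesis hcode : linear_index_code E.
Hypothesis hl : (l <= #|Yset rho| * n)%N.

Lemma decode d H (w : 'rV['F_2]_(cc rho n)) : receiver d H -> w *m Fm E = 0 ->
  info H (unflat w) = info H 0 -> unflat w d = 0.
Proof.
move=> rec wF hi; have [g hg] := hcode rec.
have := hg (unflat w); rewrite lin_unflat wF hi => <-.
by have := hg 0; rewrite lin_encode0 ffunE => ->.
Qed.

Lemma info_inl (T : {set Msg rho}) (z : {ffun Msg rho -> 'rV['F_2]_n}) :
  (forall m, m \in T -> z m = 0) -> info (inl T) z = info (inl T) 0.
Proof.
move=> h; apply/ffunP => m; rewrite !ffunE; case: ifP => // /h ->.
reflexivity.
Qed.

Lemma info_HSum (T : {set Msg rho}) (z : {ffun Msg rho -> 'rV['F_2]_n}) :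
  (forall m, m \in T -> z m = 0) -> info (HSum T) z = info (HSum T) 0.
Proof.
move=> h; rewrite /HSum; case: (_ == 1%N); first exact: info_inl.
apply/ffunP => m; rewrite /info !ffunE /=.
by rewrite !big1 // => x xT; rewrite ?ffunE ?h.
Qed.

Lemma L3 (w : 'rV['F_2]_(cc rho n)) : w *m Fm E = 0 -> w *m Dm n (Xset rho) = 0 -> w = 0.
Proof.
move=> wF wX; apply: unflat0 => m.
case: (boolP (m \in Xset rho)) => mX; first exact: mulD0_in wX _ mX.
case: m mX => [j|[i j]] mX; first by rewrite inE in mX.
apply: (decode (H := HKnow (Xset rho))) => //.
  by right; right; exists i, j.
by apply: info_inl => m; exact: mulD0_in wX m.
Qed.

Lemma L1 b (w : 'rV['F_2]_(cc rho n)) : basis_vec rho b -> w *m Fm E = 0 -> w *m Dm n (Tset rho b) = 0 ->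
  w *m Dm n (Xset rho) = 0.
Proof.
move=> bb wF wT; apply: mulD0 => m; case: m => [j|y] mX; last by rewrite inE in mX.
apply: (decode (H := HKnow (Tset rho b))) => //; last first.
  by apply: info_inl => m; exact: mulD0_in wT m.
left; exists b, j, (fun l => pre rho l (b l)); split => //; split => //; split => //.
move=> i _; split; first exact: pre_zeta.
by rewrite card_pre //; apply: inD_le; case: bb.
Qed.

Lemma pre_Tset (u : vec r) k a : (a <= u k)%N -> pre rho k a \subset Tset rho u.
Proof.
move=> h; apply/subsetP => m /imsetP [q]; rewrite inE => qa ->.
by rewrite mem_Tset; exact: leq_trans qa h.
Qed.

Definition YS (S : {set 'I_r}) : {set Msg rho} := \bigcup_(i in S) zeta rho i.

Lemma L2 (S : {set 'I_r}) (u : vec r) (w : 'rV['F_2]_(cc rho n)) : inD rho u -> (forall i, i \notin S -> u i = 0%N) ->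
  sumA u S = rho S -> w *m Fm E = 0 -> w *m Dm n (Tset rho u) = 0 ->
  w *m Dm n (YS S) = 0.
Proof.
move=> Du uS su wF wT.
apply: mulD0 => m /bigcupP [i iS /imsetP [p _ ->]].
case: (ltnP p (u i)) => pu.
  by apply: mulD0_in wT _ _; rewrite mem_Tset.
pose v := incr u i.
have ev : excluded rho v.
  split.
    move=> k; rewrite ffunE; case: eqVneq => [->|ne].
      by have := ltn_ord p; lia.
    by rewrite addn0; exact: inD_le.
  move=> Dv; have := Dv S; have := sumA_incr u S i; rewrite /sumA in su * => ->.
  by rewrite iS su; lia.
have [c [mc cv]] := descent ev.
have ci : c i = (u i).+1.
  apply/eqP; rewrite eqn_leq; have := cv i; rewrite ffunE eqxx addn1 => -> /=.
  rewrite ltnNge; apply/negP => ciu.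
  apply: mc.1.2; apply: (inD_down _ Du) => k; case: (eqVneq k i) => [->//|ne].
  by have := cv k; rewrite ffunE (negbTE ne) addn0.
have ck : forall k, k != i -> (c k <= u k)%N.
  by move=> k ne; have := cv k; rewrite ffunE (negbTE ne) addn0.
apply: (decode (H := HSum ((\bigcup_(l in Defs.support c :\ i) pre rho l (c l)) :|: pre rho i (u i)))) => //.
  right; left; exists c, i, p, (fun l => pre rho l (c l)), (pre rho i (u i)).
  split => //; split; first by rewrite inE ci.
  split => //; split.
    by move=> k _; split; [exact: pre_zeta | apply: card_pre; exact: mc.1.1 k].
  split.
    apply/subsetP => m' /imsetP [q]; rewrite inE => qu ->.
    rewrite in_setD1 ymsg_zeta andbT; apply/negP => /eqP /ymsg_inj eq.
    by rewrite eq ltnNge pu in qu.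
  by rewrite ci card_pre //; exact: inD_le.
apply: info_HSum => m'; rewrite in_setU => /orP [/bigcupP [k kc mk] | mk];
  apply: mulD0_in wT _ _.
  move: kc; rewrite in_setD1 => /andP [ne _].
  exact: (subsetP (pre_Tset (ck k ne))).
exact: (subsetP (@pre_Tset u i (u i) (leqnn _)) _ mk).
Qed.

Definition KK := kermx (Fm E).

Lemma inK (v : 'rV['F_2]_(cc rho n)) : (v <= KK)%MS -> v *m Fm E = 0.
Proof. by move/sub_kermxP. Qed.

Lemma rank_inj (m p : nat) (A : 'M['F_2]_(m, cc rho n)) (B : 'M['F_2]_(cc rho n, p)) :
  (forall v : 'rV_(cc rho n), (v <= A)%MS -> v *m B = 0 -> v = 0) ->
  \rank (A *m B) = \rank A.
Proof.
move=> h; have := mxrank_mul_ker A B.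
suff -> : \rank (A :&: kermx B)%MS = 0%N by rewrite addn0.
apply/eqP; rewrite mxrank_eq0; apply/eqP/row_matrixP => i; rewrite row0.
apply: h; first exact: submx_trans (row_sub i _) (capmxSl _ _).
apply/sub_kermxP; exact: submx_trans (row_sub i _) (capmxSr _ _).
Qed.

Lemma rankK : (kk rho * n <= \rank KK)%N.
Proof.
rewrite mxrank_ker; have := rank_leq_col (Fm E).
have hc : cc rho n = ((kk rho + #|Yset rho|) * n)%N.
  by rewrite /cc card_prod card_Msg card_ord.
move: hl; lia.
Qed.

Lemma rank_Tb b : basis_vec rho b ->
  \rank (KK *m Dm n (Tset rho b)) = \rank (Dm n (Tset rho b)).
Proof.
move=> bb.
have inj : \rank (KK *m Dm n (Tset rho b)) = \rank KK.
  apply: rank_inj => v vK vT; have vF := inK vK.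
  exact: L3 vF (L1 bb vF vT).
have rD : (\rank (Dm n (Tset rho b)) <= kk rho * n)%N.
  rewrite rank_Dm card_Tset; last by move=> i; apply: inD_le; case: bb.
  by apply: leq_mul => //; apply: inD_sum_le; case: bb.
have := mxrankM_maxr KK (Dm n (Tset rho b)); have := rankK; lia.
Qed.

Lemma rank_Tu (u b : vec r) : vle u b -> basis_vec rho b ->
  \rank (KK *m Dm n (Tset rho u)) = (#|Tset rho u| * n)%N.
Proof.
move=> ub bb.
have eq1 : (KK *m Dm n (Tset rho b) == Dm n (Tset rho b))%MS.
  by rewrite -(geq_leqif (mxrank_leqif_eq (submxMl _ _))) rank_Tb.
have e := eqmxMr (Dm n (Tset rho u)) (eqmxP eq1).
rewrite -mulmxA DmM (setIidPr (Tset_mono rho ub)) in e.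
by rewrite e rank_Dm.
Qed.

Lemma rank_S S : \rank (KK *m Dm n (YS S)) = (rho S * n)%N.
Proof.
have [u [Du [uS su]]] := greedy h0 hmono hsub S.
have [b [Db [ub nb]]] := @ascent _ _ h0 (inD rho) u Du (fun v h => h).
have cu : #|Tset rho u| = rho S.
  rewrite card_Tset; last by move=> i; exact: inD_le.
  rewrite -su /sumA [LHS](bigID (mem S)) /= [X in (_ + X)%N]big1 ?addn0 //.
have hTY : Tset rho u \subset YS S.
  apply/subsetP => m /bigcupP [k]; rewrite inE => uk mk.
  have kS : k \in S by apply: contraLR uk => /uS ->.
  by apply/bigcupP; exists k => //; exact: (subsetP (pre_zeta rho k (u k))).
have eYT : Dm n (YS S) *m Dm n (Tset rho u) = Dm n (Tset rho u) by rewrite DmM (setIidPr hTY).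
have r1 : \rank (KK *m Dm n (YS S) *m Dm n (Tset rho u)) = \rank (KK *m Dm n (YS S)).
  apply: rank_inj => v /submxP [x ->]; rewrite mulmxA => h.
  have wK : (x *m KK <= KK)%MS by exact: submxMl.
  apply: (L2 Du uS su (inK wK)).
  by rewrite -h -!mulmxA eYT.
by rewrite -r1 -mulmxA eYT (rank_Tu ub (conj Db nb)) cu.
Qed.

Lemma Dm_sub (Q P : {set Msg rho}) : Q \subset P -> (Dm n Q <= Dm n P)%MS.
Proof.
move=> h; have <- : Dm n (Q :&: P) = Dm n Q by rewrite (setIidPl h).
by rewrite -DmM submxMl.
Qed.

Lemma Dm_sum S : (Dm n (YS S) <= \sum_(i in S) Dm n (zeta rho i))%MS.
Proof.
apply/row_subP => j; rewrite row_diag_mx mxE.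
case: (boolP ((enum_val j).1 \in YS S)) => h /=; last by rewrite scale0r sub0mx.
case/bigcupP: h => i iS hi; apply: (sumsmx_sup i) => //.
rewrite (_ : _ *: _ = row j (Dm n (zeta rho i))) ?row_sub //.
by rewrite row_diag_mx mxE hi.
Qed.

Lemma Dm_tr (Q : {set Msg rho}) : (Dm n Q)^T = Dm n Q.
Proof. exact: tr_diag_mx. Qed.

Lemma final : representable_F2 rho n.
Proof.
exists (cc rho n), (fun i => Dm n (zeta rho i) *m KK^T) => S.
have e : (\sum_(i in S) (Dm n (zeta rho i) *m KK^T) :=: Dm n (YS S) *m KK^T)%MS.
  apply/eqmxP/andP; split.
    apply/sumsmx_subP => i iS; apply: submxMr; apply: Dm_sub.
    exact: (bigcup_sup i iS).
  apply: submx_trans (submxMr _ (Dm_sum S)) _.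
  by rewrite sumsmxMr.
rewrite e.
have -> : Dm n (YS S) *m KK^T = (KK *m Dm n (YS S))^T.
  by rewrite [RHS]trmx_mul Dm_tr.
by rewrite mxrank_tr rank_S mulnC.
Qed.
End Main.

Local Close Scope ring_scope.
Theorem theorem2 (r : nat) (rho : {set 'I_r} -> nat) (n : nat) :
  rho set0 = 0 ->
  (forall A B : {set 'I_r}, A \subset B -> rho A <= rho B) ->
  (forall A B : {set 'I_r}, rho (A :|: B) + rho (A :&: B) <= rho A + rho B) ->
  0 < n ->
  perfect_linear_solution rho n ->
  representable_F2 rho n.
Proof.
move=> h0 hmono hsub _ [l [E [hcode hl]]].
apply: (final h0 hmono hsub hcode).
by rewrite hl; apply: leq_mul => //; exact: mu_bound.
Qed.
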